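(* Let $\eta\in(0,1)$. There exists a positive sequence $(\epsilon_j)_{j\ge1}$ converging to $0$ such that, with probability 1, for every $j$ large enough and every $W\in\Sigma_{\lfloor j(\eta-\epsilon_j)\rfloor}$, one has $\mathcal S_j(\eta,W)\neq\emptyset$.
   Context: Fix $d\ge1$. $\Sigma_j$ is the set of words of length $j$ over the alphabet $\{0,1\}^d$ and $\Sigma^*=\bigcup_{j\ge1}\Sigma_j$; for $w=w_1\cdots w_j\in\Sigma_j$ with $w_k=(w_k^{(1)},\dots,w_k^{(d)})$, $I_w=\prod_{i=1}^d[x_w^{(i)},x_w^{(i)}+2^{-j}]$ where $x_w^{(i)}=\sum_{k=1}^jw_k^{(i)}2^{-k}$. Let $(p_w)_{w\in\Sigma^*}$ be independent Bernoulli random variables with $\mathbb P(p_w=1)=2^{-d(1-\eta)|w|}$. Set $\mathcal S_j(\eta)=\{w\in\Sigma_j:p_w=1\}$ and, for $W\in\Sigma^*$, $\mathcal S_j(\eta,W)=\{w\in\mathcal S_j(\eta): I_w\subset I_W\}$. *)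

(* Defs.v *)
From HB Require Import structures.
From mathcomp Require Import all_boot all_order all_algebra.
From mathcomp Require Import all_classical all_reals all_analysis.
Set Implicit Arguments. Unset Strict Implicit. Unset Printing Implicit Defensive.
Import Order.TTheory GRing.Theory Num.Theory.
Local Open Scope classical_set_scope.
Local Open Scope ring_scope.

(* Words of length j over the alphabet {0,1}^d: w k i = w_k^{(i)} (k < j, i < d). *)
Definition word (d j : nat) := {ffun 'I_j -> {ffun 'I_d -> bool}}.

(* Sigma^* : words of any length (the length is the tag); p is only
   constrained on lengths j >= 1. *)
Definition anyword (d : nat) := {j : nat & word d j}.

(* x_w^{(i)} = sum_{k=1}^j w_k^{(i)} 2^{-k}  (0-indexed k here) *)
Definition corner (R : realType) (d j : nat) (w : word d j) (i : 'I_d) : R :=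
  \sum_(k < j) ((w k i : nat)%:R * 2 ^- k.+1).

Definition cube (R : realType) (d j : nat) (w : word d j) : set ('I_d -> R) :=
  [set x | forall i, @corner R d j w i <= x i <= @corner R d j w i + 2 ^- j].

Definition mutually_independent (R : realType) (dT : measure_display)
  (T : measurableType dT) (P : probability T R) (I : eqType) (X : I -> T -> bool) :=
  forall (s : seq I), uniq s -> forall b : I -> bool,
    P (\bigcap_(i in [set` s]) [set t | X i t = b i]) =
    (\prod_(i <- s) P [set t | X i t = b i])%E.

(* Main.v *)
Require Import Defs.
From HB Require Import structures.
From mathcomp Require Import all_boot all_order all_algebra.
From mathcomp Require Import all_classical all_reals all_analysis.
From mathcomp Require Import ring lra zify.
Import Order.TTheory GRing.Theory Num.Theory.
Local Open Scope classical_set_scope.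
Local Open Scope ring_scope.


Definition wnth {d n : nat} (w : word d n) (m : nat) : {ffun 'I_d -> bool} :=
  if insub m is Some i then w i else [ffun=> false].

Lemma wnthE {d n} (w : word d n) (i : 'I_n) : wnth w i = w i.
Proof. by rewrite /wnth valK. Qed.

Definition ext {d k j : nat} (W : word d k) (v : word d (j - k)) : word d j :=
  [ffun i : 'I_j => if (i < k)%N then wnth W i else wnth v (i - k)].

Lemma ext_inj d k j (W : word d k) : (k <= j)%N -> injective (@ext d k j W).
Proof.
move=> kj v1 v2 e; apply/ffunP => i.
have hi : (k + i < j)%N by have := ltn_ord i; lia.
have := congr1 (fun f : word d j => f (Ordinal hi)) e.
rewrite /ext !ffunE /= ltnNge leq_addr /= addKn.
by rewrite !wnthE.
Qed.

Lemma geom_tail (R : realType) k j : (k <= j)%N ->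
  \sum_(k <= m < j) (2:R)^-m.+1 = 2^-k - 2^-j.
Proof.
elim: j => [|j IH] kj.
  by rewrite leqn0 in kj; rewrite (eqP kj) big_geq // subrr.
case: (ltnP k j.+1) => h; last first.
  have -> : k = j.+1 by lia.
  by rewrite big_geq // subrr.
rewrite big_nat_recr /=; last by lia.
rewrite IH; last by lia.
rewrite [in X in _ = _ - X]exprS invfM.
set a := 2^-j.
have : (2:R)^-1 * a = a / 2 by rewrite mulrC.
move=> ->; rewrite /a exprS invfM mulrC; field.
by rewrite !expf_neq0.

Qed.

Lemma corner_ext (R : realType) d k j (W : word d k) (v : word d (j - k)) i :
  (k <= j)%N ->
  corner R (ext W v) i = corner R W i +
    \sum_(k <= m < j) ((wnth v (m - k) i : nat)%:R * 2^-m.+1).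
Proof.
move=> kj; rewrite /corner.
pose g (m : nat) : R := (((if (m < k)%N then wnth W m else wnth v (m - k)) i : nat)%:R * 2^-m.+1).
rewrite (eq_bigr (fun m : 'I_j => g m)); last by move=> m _; rewrite ffunE.
rewrite -(big_mkord xpredT g) (big_cat_nat (leq0n k) kj) /=.
congr (_ + _).
  rewrite (eq_bigr (fun m : 'I_k => (wnth W m i : nat)%:R * 2^-m.+1)); last first.
    by move=> m _; rewrite wnthE.
  rewrite -(big_mkord xpredT (fun m => ((wnth W m i : nat)%:R * 2^-m.+1))).
  by apply: eq_big_nat => m /andP[_ mk]; rewrite /g mk.
by apply: eq_big_nat => m /andP[km _]; rewrite /g ltnNge km.
Qed.

Lemma cube_ext (R : realType) d k j (W : word d k) (v : word d (j - k)) :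
  (k <= j)%N -> @cube R d j (ext W v) `<=` @cube R d k W.
Proof.
move=> kj x; rewrite /cube /= => hx i.
have /andP[h1 h2] := hx i.
move: h1 h2; rewrite corner_ext //.
set S := \sum_(_ <= _ < _) _.
have S0 : 0 <= S by apply: sumr_ge0 => m _; apply: mulr_ge0 => //; rewrite ?ler0n // invr_ge0 exprn_ge0.
have S1 : S <= 2^-k - 2^-j.
  rewrite -geom_tail //; apply: ler_sum => m _.
  rewrite -[leRHS]mul1r ler_wpM2r ?invr_ge0 ?exprn_ge0 //.
  by case: (wnth v (m - k) i) => /=; rewrite ?ler0n.
move=> h1 h2; apply/andP; split; lra.
Qed.

Lemma meas_has (dT : measure_display) (T : measurableType dT) (I : Type)
  (A : I -> T -> bool) (s : seq I) :
  (forall i, measurable [set t | A i t]) ->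
  measurable [set t | has (fun i => A i t) s].
Proof.
move=> mA; elim: s => [|a s IH] /=.
  by rewrite [X in measurable X](_ : _ = set0) //; apply/seteqP; split => t.
rewrite [X in measurable X](_ : _ = [set t | A a t] `|` [set t | has (fun i => A i t) s]).
  exact: measurableU.
by apply/seteqP; split => t /=; [move/orP|move=> [] ->; rewrite ?orbT].
Qed.

Lemma measure_has (dT : measure_display) (T : measurableType dT) (R : realType)
  (mu : {measure set T -> \bar R}) (I : Type)
  (A : I -> T -> bool) (s : seq I) :
  (forall i, measurable [set t | A i t]) ->
  (mu [set t | has (fun i => A i t) s] <= \sum_(i <- s) mu [set t | A i t])%E.
Proof.
move=> mA; elim: s => [|a s IH] /=.
  rewrite big_nil [X in mu X](_ : _ = set0) ?measure0 //.
  by apply/seteqP; split => t.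
rewrite big_cons.
rewrite [X in mu X](_ : _ = [set t | A a t] `|` [set t | has (fun i => A i t) s]).
  apply: le_trans (measureU2 _ _ _) _ => //; first exact: meas_has.
  by apply: leeD.
by apply/seteqP; split => t /=; [move/orP|move=> [] ->; rewrite ?orbT].
Qed.

Lemma meas_all (dT : measure_display) (T : measurableType dT) (I : Type)
  (X : I -> T -> bool) (s : seq I) :
  (forall i, measurable [set t | X i t]) ->
  measurable [set t | all (fun i => ~~ X i t) s].
Proof.
move=> mX; elim: s => [|a s IH] /=.
  by rewrite [X in measurable X](_ : _ = setT) //; apply/seteqP; split => t.
rewrite [X in measurable X](_ : _ = ~` [set t | X a t] `&` [set t | all (fun i => ~~ X i t) s]).
  by apply: measurableI => //; apply: measurableC.
apply/seteqP; split => t /=; first by move/andP=> [/negP ? ?].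
by move=> [/negP -> ->].
Qed.

Lemma indep_none (R : realType) (dT : measure_display) (T : measurableType dT)
  (P : probability T R) (I : eqType) (X : I -> T -> bool) (q : R) :
  mutually_independent P X ->
  (forall i, measurable [set t | X i t]) ->
  forall s, uniq s -> (forall i, i \in s -> P [set t | X i t] = q%:E) ->
  P [set t | all (fun i => ~~ X i t) s] = ((1 - q) ^+ size s)%:E.
Proof.
move=> ind mX s us PX.
have := ind s us (fun _ => false).
rewrite [X in P X = _ -> _](_ : _ = [set t | all (fun i => ~~ X i t) s]); last first.
  apply/seteqP; split => t /=.
    move=> H; apply/allP => i iS; apply/negP => Xi.
    by have /= := H i iS; rewrite Xi.
  by move=> /allP H i /= iS; apply/negbTE; apply: H.
move=> ->.
elim: {us} s PX => [|a s IH] PX; first by rewrite big_nil.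
rewrite big_cons IH /=; last by move=> i iS; apply: PX; rewrite inE iS orbT.
rewrite exprS EFinM; congr (_ * _)%E.
rewrite [X in P X](_ : _ = ~` [set t | X a t]); last first.
  by apply/seteqP; split => t /=; [move=> ->|move/negP/negbTE].
by rewrite probability_setC // PX // mem_head.
Qed.
Definition cst (R : realType) (d : nat) : R := d%:R * ln 2 + 1.
Definition Cst (R : realType) (d : nat) : R := 2 * (ln (cst R d) + 2) / ln 2.
Definition epsf (R : realType) (d : nat) (j : nat) : R := Cst R d / Num.sqrt (j.+1)%:R.

Lemma key_bound (R : realType) d (eta : R) j k : (1 <= d)%N -> 0 < eta < 1 ->
  (1 <= j)%N -> k%:R <= j%:R * (eta - epsf R d j) -> (k <= j)%N ->
  (expn (expn 2 d) k)%:R * (1 - (2:R) `^ (-(d%:R * (1 - eta) * j%:R)))^+(expn (expn 2 d) (j-k))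
    <= (2:R)^-(j.+1).
Proof.
move=> hd /andP[eta0 eta1] hj hk kj.
set L : R := ln 2.
have hL : 0 < L by rewrite /L ln_gt0 // ltr1n.
have e2 : expR L = 2 by rewrite /L lnK // posrE.
have dR : 1 <= d%:R :> R by rewrite ler1n.
set c := cst R d.
have c1 : 1 <= c.
  have : 0 <= d%:R * L by rewrite mulr_ge0 // ltW.
  rewrite /c /cst -/L; lra.
have lc : 0 <= ln c by apply: ln_ge0.
pose r := Num.sqrt (j.+1)%:R : R.
have hr2 : r ^+ 2 = j.+1%:R by rewrite /r sqr_sqrtr // ler0n.
have hr1 : 1 <= r.
  by rewrite /r -[X in X <= _]sqrtr1 ler_sqrt ?ler1n // ler0n.

have jR : 1 <= j%:R :> R by rewrite ler1n.
have jS : (j.+1)%:R = j%:R + 1 :> R by rewrite -natr1.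
set x := eta * j%:R - k%:R.
have hCL : Cst R d * L = 2 * (ln c + 2) by rewrite /Cst -/L -/c divfK // gt_eqF.
have hxr : x * r >= j%:R * Cst R d.
  move: hk; rewrite /epsf -/r => hk.
  have r0 : 0 < r by apply: lt_le_trans hr1.
  have e : (eta - Cst R d / r) * r = eta * r - Cst R d by rewrite mulrBl divfK ?gt_eqF.
  have h := hk; rewrite -(ler_pM2r r0) -mulrA e in h.
  rewrite /x; nra.
have hLx : L * x >= ln c + 2 * r.
  have h1 : L * x * r >= (ln c + 2 * r) * r.
    have h0 : L * (j%:R * Cst R d) <= L * (x * r) by rewrite ler_pM2l.
    have e : L * (j%:R * Cst R d) = 2 * (ln c + 2) * j%:R.
      by rewrite mulrCA (mulrC L) hCL mulrC.
    rewrite e in h0.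
    have r2j : r * r <= 2 * j%:R by rewrite -expr2 hr2 jS; lra.
    have rr : r <= r * r by nra.
    have : ln c * r <= ln c * (2 * j%:R) by apply: ler_wpM2l => //; lra.
    nra.
  by rewrite ler_pM2r // in h1; apply: lt_le_trans hr1.
have x0 : 0 <= x.
  have : 0 <= ln c + 2 * r by nra.
  move=> h; have : 0 <= L * x by apply: le_trans h hLx.
  by rewrite pmulr_rge0.
have hdLx : d%:R * L * x >= ln c + 2 * r.
  apply: le_trans hLx _; rewrite -mulrA ler_peMl //; by rewrite mulr_ge0 // ltW.
set q := (2:R) `^ (-(d%:R * (1 - eta) * j%:R)).
have qE : q = expR (-(d%:R * (1 - eta) * j%:R) * L) by rewrite /q /powR pnatr_eq0 /=.
have q0 : 0 <= q by rewrite qE expR_ge0.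
have q1 : q <= 1.
  rewrite qE -[X in _ <= X]expR0 ler_expR mulNr oppr_le0.
  by rewrite !mulr_ge0 // ?ler0n ?subr_ge0 ?ltW.
set N := (expn (expn 2 d) (j-k)).
have NE : N%:R = expR ((d * (j - k))%:R * L).
  by rewrite expRM_natl e2 /N natrX natrX -exprM.
have Nq : N%:R * q = expR (d%:R * L * x).
  rewrite NE qE -expRD; congr expR.
  rewrite natrM natrB // /x; ring.
have Nqc : N%:R * q >= c * (j.+1)%:R.
  rewrite Nq; apply: le_trans (_ : expR (ln c + 2 * r) <= _); last by rewrite ler_expR.
  rewrite expRD lnK ?posrE ?(lt_le_trans ltr01 c1) //.
  rewrite ler_pM2l ?(lt_le_trans ltr01 c1) // -hr2 expRM_natl.
  rewrite lerXn2r ?nnegrE ?expR_ge0 ?(le_trans _ hr1) //.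
  by apply: le_trans (expR_ge1Dx r); lra.
have hpow : (1 - q) ^+ N <= expR (- (N%:R * q)).
  rewrite -mulrN expRM_natl lerXn2r ?nnegrE ?expR_ge0 ?subr_ge0 //.
  by have := expR_ge1Dx (- q); lra.
have h2k : (expn (expn 2 d) k)%:R <= expR ((d * j)%:R * L) :> R.
  rewrite expRM_natl e2 natrX natrX -exprM ler_eXn2l ?ltr1n //.
  by rewrite leq_mul2l kj orbT.
apply: le_trans (_ : expR ((d * j)%:R * L) * expR (- (N%:R * q)) <= _).
  by apply: ler_pM => //; rewrite ?ler0n //; apply: exprn_ge0; rewrite subr_ge0.
rewrite -expRD.
apply: le_trans (_ : expR (- (j.+1)%:R) <= _).
  rewrite ler_expR natrM /c /cst -/L in Nqc *.
  have dL0 : 0 <= d%:R * L by rewrite mulr_ge0 // ?ler0n // ltW.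
  rewrite jS in Nqc *; nra.
rewrite expRN lef_pV2 ?posrE ?exprn_gt0 ?expR_gt0 //.
rewrite -[X in expR X]mulr1 expRM_natl lerXn2r ?nnegrE ?expR_ge0 //.
by have := expR_ge1Dx (1:R); lra.
Qed.

Lemma Cst_gt0 (R : realType) d : 0 < Cst R d.
Proof.
have hL : 0 < ln (2:R) by rewrite ln_gt0 // ltr1n.
have : 0 <= ln (cst R d).
  by apply: ln_ge0; rewrite /cst lerDr mulr_ge0 ?ler0n // ltW.
move=> h; rewrite /Cst divr_gt0 // mulr_gt0 //; lra.
Qed.

Lemma epsf_gt0 (R : realType) d j : 0 < epsf R d j.
Proof. by rewrite /epsf divr_gt0 ?Cst_gt0 // sqrtr_gt0 ltr0n. Qed.

Lemma epsf_cvg (R : realType) d : epsf R d @ \oo --> 0.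
Proof.
have -> : epsf R d = (fun j => Cst R d * Num.sqrt (harmonic j)).
  by apply/funext => j; rewrite /epsf /= sqrtrV ?ler0n.
rewrite -(mulr0 (Cst R d)) -sqrtr0.
apply: cvgMl_tmp.
exact: (cvg_comp _ _ cvg_harmonic (@sqrt_continuous R 0)).
Qed.

Theorem lemma2 (R : realType) (d : nat) (hd : (1 <= d)%N) (eta : R)
  (heta : 0 < eta < 1)
  (dT : measure_display) (T : measurableType dT) (P : probability T R)
  (p : anyword d -> T -> bool)
  (p_meas : forall w : anyword d, measurable [set t | p w t])
  (p_law : forall w : anyword d, (1 <= projT1 w)%N ->
     P [set t | p w t] = ((2 : R) `^ (- (d%:R * (1 - eta) * (projT1 w)%:R)))%:E)
  (p_indep : mutually_independent P
     (fun w : {w : anyword d | (1 <= projT1 w)%N} => p (sval w))) :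
  exists eps : nat -> R,
    (forall j, 0 < eps j) /\ eps @ \oo --> 0 /\
    {ae P, forall t,
       exists J : nat, forall j : nat, (J <= j)%N ->
         forall (k : nat) (W : word d k),
           (k%:Z = Num.floor (j%:R * (eta - eps j))) ->
           exists w : word d j, p (existT _ j w) t /\ @cube R d j w `<=` @cube R d k W}.
Proof.
pose X := fun w : {w : anyword d | (1 <= projT1 w)%N} => p (sval w).
have mX : forall i, measurable [set t | X i t] by move=> i; exact: p_meas.
exists (epsf R d); split; first exact: epsf_gt0.
split; first exact: epsf_cvg.
have /andP[eta0 eta1] := heta.
pose fl n := Num.floor ((n.+1)%:R * (eta - epsf R d n.+1)).
pose kk n : nat := `|fl n|%N.
pose mkI n (w : word d n.+1) : {w : anyword d | (1 <= projT1 w)%N} :=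
  exist (fun w : anyword d => (1 <= projT1 w)%N) (existT (fun j => word d j) n.+1 w) (ltn0Sn n).
pose sW n (W : word d (kk n)) := [seq mkI n (ext W v) | v <- enum (word d (n.+1 - kk n))].
pose F n : set T := if (0 <= fl n)%R
   then [set t | has (fun W => all (fun i => ~~ X i t) (sW n W)) (enum (word d (kk n)))]
   else set0.
have kkle n : (0 <= fl n)%R -> (kk n)%:R <= (n.+1)%:R * (eta - epsf R d n.+1).
  by move=> h; rewrite /kk natr_absz ger0_norm // floor_le.
have kkj n : (0 <= fl n)%R -> (kk n <= n.+1)%N.
  move=> h; have := kkle n h; have := epsf_gt0 R d n.+1.
  have : (0 : R) < (n.+1)%:R by rewrite ltr0n.
  move=> h1 h2 h3; apply: ltnW; rewrite -(ltr_nat R); nra.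
have mF n : measurable (F n).
  rewrite /F; case: ifP => _ //; apply: meas_has => W; exact: meas_all.
have PF n : (P (F n) <= ((2:R)^-(n.+2))%:E)%E.
  rewrite /F; case: ifP => h0; last by rewrite measure0 lee_fin invr_ge0 exprn_ge0.
  apply: le_trans (@measure_has _ _ _ P _ (fun W t => all (fun i => ~~ X i t) (sW n W)) _ _) _.
    by move=> W; exact: meas_all.
  pose q : R := 2 `^ (- (d%:R * (1 - eta) * (n.+1)%:R)).
  have us W : uniq (sW n W).
    rewrite map_inj_uniq ?enum_uniq // => v1 v2 /(congr1 sval) /= e.
    apply: (@ext_inj d (kk n) n.+1 W (kkj n h0)).
    exact: (Eqdep_dec.inj_pair2_eq_dec nat PeanoNat.Nat.eq_dec (fun j => word d j) n.+1 _ _ e).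
  have PX W i : i \in sW n W -> P [set t | X i t] = q%:E.
    by move=> /mapP [v _ ->]; rewrite /X /= p_law.
  rewrite (eq_bigr (fun W => ((1 - q) ^+ size (sW n W))%:E)); last first.
    by move=> W _; apply: (@indep_none _ _ _ P _ X q p_indep mX _ (us W) (PX W)).
  rewrite sumEFin lee_fin.
  rewrite (eq_bigr (fun _ => (1 - q) ^+ (expn (expn 2 d) (n.+1 - kk n)))); last first.
    by move=> W _; rewrite size_map -cardE card_ffun card_ffun card_bool card_ord card_ord.
  rewrite big_const_seq count_predT -cardE iter_addr_0 -[X in X <= _]mulr_natl.
  rewrite card_ffun card_ffun card_bool card_ord card_ord.
  have := (key_bound R d eta n.+1 (kk n) hd heta (ltn0Sn n) (kkle n h0) (kkj n h0)).
  by rewrite /q.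
have Hfin : (\sum_(n <oo) P (F n) < +oo)%E.
  apply: le_lt_trans (_ : (\sum_(n <oo) ((1 / (2 ^ (n + 2))%:R : R)%:E) < +oo)%E).
    apply: lee_nneseries => [i _ _|i _]; first exact: measure_ge0.
    by rewrite (le_trans (PF i)) // lee_fin div1r natrX addn2.
  have := @cvg_geometric_eseries_half R 1 1.
  move/cvg_lim => ->; first by rewrite ltry.
  done.
have P0 := @lim_sup_set_cvg0 _ _ _ P F mF Hfin.
exists (lim_sup_set F); split => //.
  by apply: bigcap_measurable => // k _; apply: bigcup_measurable => j _; exact: mF.
move=> t /= nQ n0 _.
apply: contrapT => nU; apply: nQ.
exists n0.+1 => j Jj k W hk.
case: j Jj hk => [//|n] Jn hk.
have nF : ~ F n t by move=> Fn; apply: nU; exists n => //=; lia.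
have h0 : (0 <= fl n)%R by rewrite /fl -hk.
have ek : kk n = k by rewrite /kk /fl -hk.
move: W; rewrite -ek => W.
move: nF; rewrite /F h0 /= => /negP.
move/hasPn => /(_ W (mem_enum _ W)) /allPn [i /mapP [v _ ->] /negPn Xv].
exists (ext W v); split; first exact: Xv.
exact: cube_ext (kkj n h0).
Qed.
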